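(* Let $\Xi_h=\{v\in X_h: b_h(v,q)=0\ \text{for all } q\in M_h\}$. There exists a constant $\alpha>0$ such that $s_h(v,v)\ge\alpha\|v\|_*^2$ for all $v\in\Xi_h$.
   Context: Let $\Omega\subset\mathbb R^2$ be an open bounded domain with Lipschitz boundary, with coefficients $a_{ij}$ ($i,j=1,2$, forming a symmetric positive definite uniformly bounded tensor) and $c$ (non-positive, uniformly bounded). $\mathcal T_h$ is a shape-regular polygonal partition of $\Omega$, $h_T=\operatorname{diam}T$, $\mathcal E_h$ all edges, $\mathcal E_h^0$ interior edges. For an integer $k\ge2$, $X_h$ (resp. $M_h$) consists of functions that are polynomials of degree $\le k$ (resp. $\le k-2$) on each $T\in\mathcal T_h$. $Q_{k-2}$ is the $L^2$ projection onto $M_h$. Jumps: $[\![v]\!]=v|_{T_1}-v|_{T_2}$ on an interior edge $e=\partial T_1\cap\partial T_2$, $[\![v]\!]=v$ on a boundary edge; $[\![\nabla v]\!]$ analogously on interior edges. $s_h(u,v)=\sum_{e\in\mathcal E_h}h_T^{-3}\langle[\![u]\!],[\![v]\!]\rangle_e+\sum_{e\in\mathcal E_h^0}h_T^{-1}\langle[\![\nabla u]\!],[\![\nabla v]\!]\rangle_e$ ($h_T$ the diameter of an element containing $e$). $b_h(v,q)=\sum_{T}\big(\sum_{i,j=1}^2a_{ij}\partial^2_{ij}v+cv,q\big)_T$. $\|v\|_*=\big(\sum_{T}\|Q_{k-2}(\sum_{i,j}a_{ij}\partial^2_{ij}v+cv)\|_T^2+s_h(v,v)\big)^{1/2}$.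 *)

(* Defs.v *)
From mathcomp Require Import all_boot all_order all_algebra.
From mathcomp Require Import all_classical all_reals all_analysis.
Import Order.TTheory GRing.Theory Num.Theory numFieldNormedType.Exports.
Set Implicit Arguments.
Unset Strict Implicit.
Unset Printing Implicit Defensive.
Local Open Scope classical_set_scope.
Local Open Scope ring_scope.

Section Defs.
Context {R : realType}.
Local Notation P := (R * R)%type.

Definition edist (x y : P) : R := Num.sqrt ((x.1 - y.1) ^+ 2 + (x.2 - y.2) ^+ 2).
Definition eball (z : P) (r : R) : set P := [set x | edist z x < r].
Definition lerp (a b : P) (t : R) : P :=
  ((1 - t) * a.1 + t * b.1, (1 - t) * a.2 + t * b.2).
Definition seg (a b : P) : set P := [set lerp a b t | t in `[0, 1]].
Definition oseg (a b : P) : set P := [set lerp a b t | t in `]0, 1[].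
Definition diam (T : set P) : R :=
  sup [set r | exists x y, T x /\ T y /\ r = edist x y].
Definition ebounded (T : set P) := exists Mb : R, forall x, T x -> edist (0, 0) x <= Mb.
Definition boundary (T : set P) : set P := closure T `\` interior T.

Definition polygon (T : set P) : Prop :=
  open T /\ connected T /\ T !=set0 /\ ebounded T /\
  exists (n : nat) (v : nat -> P), (3 <= n)%N /\
    boundary T = \bigcup_(i in [set i | (i < n)%N]) seg (v i) (v (i.+1 %% n)%N).

Definition rotc (th : R) (x0 y : P) : P :=
  (cos th * (y.1 - x0.1) + sin th * (y.2 - x0.2),
   - sin th * (y.1 - x0.1) + cos th * (y.2 - x0.2)).

(** bounded domain (open, connected) with Lipschitz boundary: locally the
    domain lies below the graph of a Lipschitz function *)
Definition lipschitz_domain (O : set P) : Prop :=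
  open O /\ connected O /\ O !=set0 /\ ebounded O /\
  forall x0, boundary O x0 ->
    exists (th r L : R) (g : R -> R), 0 < r /\ 0 <= L /\
      (forall s t, `|g s - g t| <= L * `|s - t|) /\
      forall y, eball x0 r y -> (O y <-> (rotc th x0 y).2 < g (rotc th x0 y).1).

Definition poly2 (m : nat) (p : P -> R) : Prop :=
  exists cf : nat -> nat -> R, forall x : P,
    p x = \sum_(i < m.+1) \sum_(j < m.+1 | (i + j <= m)%N)
            cf i j * x.1 ^+ i * x.2 ^+ j.

Definition ebasis (i : 'I_2) : P := if i == ord0 then (1, 0) else (0, 1).
Definition pd (i : 'I_2) (f : P -> R) : P -> R := fun x => 'D_(ebasis i) f x.

Definition leb2 := ((@lebesgue_measure R) \x (@lebesgue_measure R))%E.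
Definition area_int (T : set P) (f : P -> R) : R := \int[leb2]_(x in T) f x.
(** integral over the segment [a,b] w.r.t. arc length *)
Definition edge_int (a b : P) (f : P -> R) : R :=
  edist a b * \int[@lebesgue_measure R]_(t in `[0, 1]) f (lerp a b t).

(** Polygonal mesh: elements (open polygons) and edges; each edge is a
    segment [ea e, eb e] with a first adjacent element eT1 e and, for interior
    edges, a second adjacent element eT2 e = Some T2 (None for boundary edges). *)
Local Unset Implicit Arguments.
Record mesh := Mesh {
  nel : nat;
  elem : 'I_nel -> set P;
  ned : nat;
  ea : 'I_ned -> P;
  eb : 'I_ned -> P;
  eT1 : 'I_ned -> 'I_nel;
  eT2 : 'I_ned -> option 'I_nel }.
Local Set Implicit Arguments.

Definition hT (M : mesh) (T : 'I_(nel M)) : R := diam (elem M T).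

(** M is a polygonal partition of O, shape regular with parameter rho *)
Definition is_mesh (O : set P) (rho : R) (M : mesh) : Prop :=
  (forall T, polygon (elem M T) /\ elem M T `<=` O) /\
      (forall T T', T != T' -> elem M T `&` elem M T' = set0) /\
      \bigcup_(T in setT) closure (elem M T) = closure O /\
      (forall e, ea M e != eb M e /\ seg (ea M e) (eb M e) `<=` boundary (elem M (eT1 M e))) /\
      (forall e T2, eT2 M e = Some T2 ->
         [/\ T2 != eT1 M e, seg (ea M e) (eb M e) `<=` boundary (elem M T2)
           & oseg (ea M e) (eb M e) `<=` O]) /\
      (forall e, eT2 M e = None -> seg (ea M e) (eb M e) `<=` boundary O) /\
      (forall e e', e != e' -> oseg (ea M e) (eb M e) `&` oseg (ea M e') (eb M e') = set0) /\
      (forall T, boundary (elem M T) =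
         \bigcup_(e in [set e | eT1 M e = T \/ eT2 M e = Some T]) seg (ea M e) (eb M e)) /\
    ((forall T, exists (z : P) (r : R), rho * hT T <= r /\ eball z r `<=` elem M T /\
          forall x y, elem M T x -> eball z r y -> seg x y `<=` elem M T) /\
       (forall e T, (eT1 M e = T \/ eT2 M e = Some T) ->
          rho * hT T <= edist (ea M e) (eb M e))).

(** discrete functions: one function (polynomial) per element *)
Definition dfun (M : mesh) := 'I_(nel M) -> P -> R.
Definition Xh (M : mesh) (k : nat) (v : dfun M) := forall T, poly2 k (v T).
Definition Mh (M : mesh) (k : nat) (q : dfun M) := forall T, poly2 (k - 2) (q T).

Definition jump (M : mesh) (v : dfun M) (e : 'I_(ned M)) : P -> R :=
  fun x => v (eT1 M e) x - (if eT2 M e is Some T2 then v T2 x else 0).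
Definition gjump (M : mesh) (v : dfun M) (e : 'I_(ned M)) (i : 'I_2) : P -> R :=
  fun x => pd i (v (eT1 M e)) x - (if eT2 M e is Some T2 then pd i (v T2) x else 0).
Definition hE (M : mesh) (e : 'I_(ned M)) : R := hT (eT1 M e).

Definition sh (M : mesh) (u v : dfun M) : R :=
  \sum_(e < ned M) (hE e ^+ 3)^-1 *
      edge_int (ea M e) (eb M e) (fun x => jump u e x * jump v e x)
  + \sum_(e < ned M | eT2 M e != None) (hE e)^-1 *
      edge_int (ea M e) (eb M e)
        (fun x => \sum_(i < 2) gjump u e i x * gjump v e i x).

Definition Lop (a : 'I_2 -> 'I_2 -> P -> R) (c : P -> R) (p : P -> R) : P -> R :=
  fun x => \sum_(i < 2) \sum_(j < 2) a i j x * pd i (pd j p) x + c x * p x.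

Definition bh (M : mesh) a c (v q : dfun M) : R :=
  \sum_(T < nel M) area_int (elem M T) (fun x => Lop a c (v T) x * q T x).

Definition is_L2proj (T : set P) (m : nat) (f p : P -> R) : Prop :=
  poly2 m p /\ forall q, poly2 m q -> area_int T (fun x => (f x - p x) * q x) = 0.
Definition L2proj (T : set P) (m : nat) (f : P -> R) : P -> R :=
  xget (fun _ => 0) [set p | is_L2proj T m f p].

Definition starnorm2 (M : mesh) a c (k : nat) (v : dfun M) : R :=
  \sum_(T < nel M)
     area_int (elem M T) (fun x => L2proj (elem M T) (k - 2) (Lop a c (v T)) x ^+ 2)
  + sh v v.

End Defs.

(* Main.v *)
Require Import Defs.
From mathcomp Require Import all_boot all_order all_algebra.
From mathcomp Require Import all_classical all_reals all_analysis.
From mathcomp Require Import ring lra.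
Import Order.TTheory GRing.Theory Num.Theory numFieldNormedType.Exports.
Local Open Scope classical_set_scope.
Local Open Scope ring_scope.
Set Implicit Arguments.

Section Helpers.
Context {R : realType}.
Local Notation P := (R * R)%type.
Inductive ispoly : (P -> R) -> Prop :=
| Pcst r : ispoly (fun _ => r)
| Pfst : ispoly (fun x => x.1)
| Psnd : ispoly (fun x => x.2)
| Padd f g : ispoly f -> ispoly g -> ispoly (fun x => f x + g x)
| Pmul f g : ispoly f -> ispoly g -> ispoly (fun x => f x * g x).

Lemma ispoly_sum n (F : 'I_n -> P -> R) :
  (forall i, ispoly (F i)) -> ispoly (fun x => \sum_(i < n) F i x).
Proof.
elim: n F => [|n IH] F HF.
  have -> : (fun x : P => \sum_(i < 0) F i x) = fun _ => 0.
    by apply: funext => x; rewrite big_ord0.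
  exact: Pcst.
have -> : (fun x : P => \sum_(i < n.+1) F i x) =
   fun x => \sum_(i < n) F (widen_ord (leqnSn n) i) x + F ord_max x.
  by apply: funext => x; rewrite big_ord_recr.
apply: Padd => //; exact: (IH (fun i => F (widen_ord (leqnSn n) i))).
Qed.

Lemma ispoly_exp f n : ispoly f -> ispoly (fun x => f x ^+ n).
Proof.
move=> Hf; elim: n => [|n IH].
  have -> : (fun x : P => f x ^+ 0) = fun _ => 1 by apply: funext => x; rewrite expr0.
  exact: Pcst.
have -> : (fun x : P => f x ^+ n.+1) = fun x => f x * f x ^+ n.
  by apply: funext => x; rewrite exprS.
exact: Pmul.
Qed.

Lemma poly2_ispoly m p : poly2 m p -> ispoly p.
Proof.
move=> [cf Hp].
have -> : p = fun x => \sum_(i < m.+1) \sum_(j < m.+1)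
    (if (i + j <= m)%N then cf i j * x.1 ^+ i * x.2 ^+ j else 0).
  apply: funext => x; rewrite Hp; apply: eq_bigr => i _; by rewrite big_mkcond.
apply: ispoly_sum => i; apply: ispoly_sum => j.
case: (i + j <= m)%N; last exact: Pcst.
apply: Pmul; last exact: ispoly_exp Psnd.
apply: Pmul; [exact: Pcst | exact: ispoly_exp Pfst].
Qed.

Lemma derive_fst (x e : P) :
  derivable (fun y : P => y.1) x e /\ derive (fun y : P => y.1) x e = e.1.
Proof.
have H : (fun h : R => h^-1 *: (((fun y : P => y.1) \o shift x) (h *: e) - x.1))
   @ 0^' --> e.1.
  apply: cvg_near_cst; near=> h.
  have hn : h != 0 by near: h; exact: nbhs_dnbhs_neq.
  rewrite /= addrK /GRing.scale /=.
  by rewrite mulrA mulVf // mul1r.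
split; first by apply/cvg_ex; exists e.1.
exact: cvg_lim H.
Unshelve. all: by end_near.
Qed.

Lemma derive_snd (x e : P) :
  derivable (fun y : P => y.2) x e /\ derive (fun y : P => y.2) x e = e.2.
Proof.
have H : (fun h : R => h^-1 *: (((fun y : P => y.2) \o shift x) (h *: e) - x.2))
   @ 0^' --> e.2.
  apply: cvg_near_cst; near=> h.
  have hn : h != 0 by near: h; exact: nbhs_dnbhs_neq.
  rewrite /= addrK /GRing.scale /=.
  by rewrite mulrA mulVf // mul1r.
split; first by apply/cvg_ex; exists e.2.
exact: cvg_lim H.
Unshelve. all: by end_near.
Qed.

Lemma ispoly_derive f (e : P) : ispoly f ->
  (forall x, derivable f x e) /\ ispoly (fun x => derive f x e).
Proof.
elim => {f}.
- move=> r; split => [x|]; first exact: (derivable_cst r).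
  have -> : (fun x => derive (fun _ : P => r) x e) = fun _ => 0.
    by apply: funext => x; exact: (derive_cst r).
  exact: Pcst.
- split => [x|]; first by case: (derive_fst x e).
  have -> : (fun x => derive (fun y : P => y.1) x e) = fun _ => e.1.
    by apply: funext => x; case: (derive_fst x e).
  exact: Pcst.
- split => [x|]; first by case: (derive_snd x e).
  have -> : (fun x => derive (fun y : P => y.2) x e) = fun _ => e.2.
    by apply: funext => x; case: (derive_snd x e).
  exact: Pcst.
- move=> f g _ [df pf] _ [dg pg].
  have E : (fun x => f x + g x) = f + g by [].
  rewrite E; split => [x|]; first exact: derivableD.
  have -> : (fun x => derive (f + g) x e) = fun x => derive f x e + derive g x e.
    by apply: funext => x; rewrite deriveD.
  exact: Padd.
- move=> f g Pf [df pf] Pg [dg pg].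
  have E : (fun x => f x * g x) = f * g by [].
  rewrite E; split => [x|]; first exact: derivableM.
  have -> : (fun x => derive (f * g) x e) =
      fun x => f x * derive g x e + g x * derive f x e.
    by apply: funext => x; rewrite deriveM.
  by apply: Padd; apply: Pmul.
Qed.

Lemma ispoly_pd i f : ispoly f -> ispoly (pd i f).
Proof. by move=> /(ispoly_derive (ebasis i)) []. Qed.

Lemma open_ball2 (T : set (R*R)) x : open T -> T x ->
  exists2 e : R, 0 < e & forall y : R*R, `|x.1 - y.1| < e -> `|x.2 - y.2| < e -> T y.
Proof.
move=> oT Tx.
have := oT x Tx.
move/nbhs_ballP => [e e0 He]; exists e => // y h1 h2; apply: He.
split => /=; by rewrite -ball_normE /ball_ /=.
Qed.

Definition box (q : (rat * rat) * (rat * rat)) : set (R * R) :=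
  `]ratr q.1.1, ratr q.1.2[ `*` `]ratr q.2.1, ratr q.2.2[.

Lemma open_meas2 (T : set (R*R)) : open T -> measurable T.
Proof.
move=> oT.
pose F n := match unpickle n with
  | Some q => if `[< box q `<=` T >] then box q else set0
  | None => set0 end.
have -> : T = \bigcup_n F n.
  apply/seteqP; split; last first.
    move=> x [n _]; rewrite /F; case: unpickle => [q|] //.
    by case: asboolP => // sub /sub.
  move=> x Tx; have [e e0 He] := @open_ball2 T x oT Tx.
  have [a1 Ha1] : exists q : rat, ratr q \in `]x.1 - e, x.1[.
    by apply: rat_in_itvoo; rewrite ltrBlDr ltrDl.
  have [b1 Hb1] : exists q : rat, ratr q \in `]x.1, x.1 + e[.
    by apply: rat_in_itvoo; rewrite ltrDl.
  have [a2 Ha2] : exists q : rat, ratr q \in `]x.2 - e, x.2[.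
    by apply: rat_in_itvoo; rewrite ltrBlDr ltrDl.
  have [b2 Hb2] : exists q : rat, ratr q \in `]x.2, x.2 + e[.
    by apply: rat_in_itvoo; rewrite ltrDl.
  move: Ha1 Hb1 Ha2 Hb2; rewrite !in_itv /= => /andP[a1l a1r] /andP[b1l b1r]
    /andP[a2l a2r] /andP[b2l b2r].
  have [q Hq] : exists q, q = ((a1, b1), (a2, b2)) by eexists.
  exists (pickle q); first exact: I.
  rewrite /F pickleK.
  have sub : box q `<=` T.
    move=> y []; rewrite Hq /= !in_itv /= => /andP[y1l y1r] /andP[y2l y2r].
    apply: He; rewrite ltr_norml; apply/andP; split; lra.
  rewrite (asboolT sub) Hq; split; rewrite /= in_itv /=; apply/andP; split => //.
apply: bigcupT_measurable => n; rewrite /F; case: unpickle => [q|] //.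
case: asboolP => _ //; apply: measurableX; exact: measurable_itv.
Qed.

Lemma eb_coord (T : set P) : ebounded T ->
  exists B : R, 0 <= B /\ forall x, T x -> `|x.1| <= B /\ `|x.2| <= B.
Proof.
move=> [Mb H]; exists `|Mb|; split => // x Tx.
have := H x Tx; rewrite /Defs.edist /= !sub0r !sqrrN => h.
split; apply: le_trans (ler_norm Mb); apply: le_trans h.
  rewrite -sqrtr_sqr; apply: ler_wsqrtr; rewrite lerDl; exact: sqr_ge0.
rewrite -sqrtr_sqr; apply: ler_wsqrtr; rewrite lerDr; exact: sqr_ge0.
Qed.

Lemma leb2_fin (T : set P) : measurable T -> ebounded T -> (leb2 T < +oo)%E.
Proof.
move=> mT /eb_coord [B [B0 HB]].
have sub : T `<=` `](- (B + 1)), B + 1[ `*` `](- (B + 1)), B + 1[.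
  move=> x /HB [h1 h2]; split; rewrite /= in_itv /=; apply/andP; split;
    move: h1 h2; rewrite !ler_norml => /andP[? ?] /andP[? ?]; lra.
apply: le_lt_trans.
  apply: (le_measure leb2 _ _ sub); rewrite inE //.
  apply: measurableX; exact: measurable_itv.
have L : forall a b : R, (lebesgue_measure (`]a, b[ : set R) < +oo)%E.
  move=> a b; rewrite lebesgue_measure_itv /=; case: ifP => _; last exact: ltry.
  by rewrite -EFinD ltry.
rewrite /leb2 /= product_measure1E; try exact: measurable_itv.
apply: lte_mul_pinfty; first exact: measure_ge0.
  by rewrite ge0_fin_numE; [exact: L | exact: measure_ge0].
exact: L.
Qed.

Lemma integ (T : set P) (g : P -> R) : measurable T -> ebounded T ->
  measurable_fun setT g -> (exists C, forall x, T x -> `|g x| <= C) ->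
  leb2.-integrable T (EFin \o g).
Proof.
move=> mT bT mg [C HC]; apply: measurable_bounded_integrable => //.
- exact: leb2_fin.
- exact: measurable_funS mg.
exists C; split; first exact: num_real.
move=> M CM x Tx /=; apply: le_trans (HC x Tx) _; exact: ltW.
Qed.

Definition good (E : set P) (g : P -> R) :=
  measurable_fun setT g /\ exists C, forall x, E x -> `|g x| <= C.

Lemma good_cst E r : good E (fun _ => r).
Proof. by split; [exact: measurable_cst | exists `|r|]. Qed.

Lemma good_add E f g : good E f -> good E g -> good E (fun x => f x + g x).
Proof.
move=> [mf [C1 H1]] [mg [C2 H2]]; split; first exact: measurable_realfun.measurable_funD.
exists (C1 + C2) => x Ex; apply: le_trans (ler_normD _ _) _; exact: lerD (H1 x Ex) (H2 x Ex).
Qed.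

Lemma good_mul E f g : good E f -> good E g -> good E (fun x => f x * g x).
Proof.
move=> [mf [C1 H1]] [mg [C2 H2]]; split; first exact: measurable_realfun.measurable_funM.
exists (C1 * C2) => x Ex; rewrite normrM; apply: ler_pM => //; by [apply: H1|apply: H2].
Qed.

Lemma good_sub E f g : good E f -> good E g -> good E (fun x => f x - g x).
Proof.
move=> gf gg.
have -> : (fun x => f x - g x) = fun x => f x + (-1) * g x.
  by apply: funext => x; rewrite mulN1r.
by apply: good_add => //; apply: good_mul => //; exact: good_cst.
Qed.

Lemma good_sum E n (F : 'I_n -> P -> R) :
  (forall i, good E (F i)) -> good E (fun x => \sum_(i < n) F i x).
Proof.
elim: n F => [|n IH] F HF.
  have -> : (fun x : P => \sum_(i < 0) F i x) = fun _ => 0.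
    by apply: funext => x; rewrite big_ord0.
  exact: good_cst.
have -> : (fun x : P => \sum_(i < n.+1) F i x) =
   fun x => \sum_(i < n) F (widen_ord (leqnSn n) i) x + F ord_max x.
  by apply: funext => x; rewrite big_ord_recr.
apply: good_add => //; exact: (IH (fun i => F (widen_ord (leqnSn n) i))).
Qed.

Lemma ispoly_good (E : set P) B g : (forall x, E x -> `|x.1| <= B /\ `|x.2| <= B) ->
  ispoly g -> good E g.
Proof.
move=> HB; elim => {g}.
- move=> r; exact: good_cst.
- split; first exact: measurable_fst.
  by exists B => x /HB [].
- split; first exact: measurable_snd.
  by exists B => x /HB [].
- move=> f g _ ? _ ?; exact: good_add.
- move=> f g _ ? _ ?; exact: good_mul.
Qed.
End Helpers.

Unset Implicit Arguments.

Theorem lemma3p5 (R : realType) (Omega : set (R * R))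
    (a : 'I_2 -> 'I_2 -> R * R -> R) (c : R * R -> R) (k : nat) (rho : R) :
  lipschitz_domain Omega ->
  (forall i j, a i j = a j i) ->
  (exists lam : R, 0 < lam /\ forall x, Omega x -> forall xi : 'I_2 -> R,
     lam * \sum_(i < 2) xi i ^+ 2 <= \sum_(i < 2) \sum_(j < 2) a i j x * xi i * xi j) ->
  (exists Ma : R, forall i j x, Omega x -> `|a i j x| <= Ma) ->
  (forall i j, measurable_fun [set: R * R] (a i j)) ->
  (forall x, Omega x -> c x <= 0) ->
  (exists Mc : R, forall x, Omega x -> `|c x| <= Mc) ->
  measurable_fun [set: R * R] c ->
  (2 <= k)%N -> 0 < rho ->
  exists alpha : R, 0 < alpha /\
    forall M : @mesh R, is_mesh Omega rho M ->
    forall v : dfun M, Xh k v ->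
      (forall q : dfun M, Mh k q -> bh a c v q = 0) ->
      sh v v >= alpha * starnorm2 a c k v.
Proof.
move=> _ _ _ [Ma HMa] ma _ [Mc HMc] mc _ _.
exists 1; split => // M HM v Xv Hb.
have HT : forall T, polygon (elem M T) /\ elem M T `<=` Omega by case: HM.
have mE : forall T, measurable (elem M T).
  by move=> T; case: (HT T) => [[oE _] _]; exact: open_meas2.
suff S : forall T, area_int (elem M T)
   (fun x => L2proj (elem M T) (k - 2) (Lop a c (v T)) x ^+ 2) = 0.
  by rewrite /starnorm2 big1 ?add0r ?mul1r // => T _; exact: S.
move=> T.
have [[_ [_ [_ [bE _]]]] sO] := HT T.
have [B [B0 HB]] := eb_coord bE.
set E := elem M T; set f := Lop a c (v T).
rewrite /L2proj.
case: (pselect (exists p, is_L2proj E (k - 2) f p)) => [ex | nex]; last first.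
  rewrite xgetPN; last by move=> x Px; apply: nex; exists x.
  have -> : (fun x : R * R => (fun _ : R * R => 0) x ^+ 2) = fun _ => (0 : R).
    by apply: funext => x; rewrite expr0n.
  by rewrite /area_int Rintegral_cst; [exact: mul0r | exact: mE].
have [pp orth] := xgetPex (fun _ => 0) ex.
set p := xget _ _ in pp orth *.
pose q : dfun M := fun T' => if T' == T then p else (fun _ => 0).
have Mq : Mh k q.
  move=> T'; rewrite /q; case: eqP => _ //.
  exists (fun _ _ => 0) => x; rewrite big1 // => i _; rewrite big1 // => j _.
  by rewrite !mul0r.
have := Hb q Mq; rewrite /bh (bigD1 T) //= big1 ?addr0; last first.
  move=> T' /negbTE nT; rewrite /q nT.
  have -> : (fun x => Lop a c (v T') x * 0) = fun _ => (0 : R).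
    by apply: funext => x; rewrite mulr0.
  by rewrite /area_int Rintegral_cst; [exact: mul0r | exact: mE].
rewrite /q eqxx => hf.
have gp : good E p := ispoly_good _ _ HB (poly2_ispoly pp).
have gf : good E f.
  apply: good_add.
    apply: good_sum => i; apply: good_sum => j; apply: good_mul.
      split; first exact: ma.
      by exists Ma => x Ex; apply: HMa; apply: sO.
    exact: ispoly_good _ _ HB (ispoly_pd i (ispoly_pd j (poly2_ispoly (Xv T)))).
  apply: good_mul; last exact: ispoly_good _ _ HB (poly2_ispoly (Xv T)).
  split; first exact: mc.
  by exists Mc => x Ex; apply: HMc; apply: sO.
have -> : (fun x => p x ^+ 2) = fun x => f x * p x - (f x - p x) * p x.
  by apply: funext => x; ring.
have g1 : good E (fun x => f x * p x) by exact: good_mul.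
have g2 : good E (fun x => (f x - p x) * p x) by apply: good_mul => //; exact: good_sub.
rewrite /area_int RintegralB.
- by rewrite [X in X - _]hf [X in _ - X](orth p pp) subr0.
- exact: mE.
- by case: g1 => m1 h1; apply: integ => //; exact: mE.
- by case: g2 => m1 h1; apply: integ => //; exact: mE.
Qed.
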